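(* In the resource theory of unital maps on a $d$-dimensional Hilbert space with fixed orthonormal basis $\{\ket i\}_{i=1}^d$, let $C^k=\{\Pi^k/k\}$ and $C_2^k=\big(\{\ket i\bra i\}_{1\le i\le k}\big)^{\mathrm P}$ (the convex hull of the first $k$ basis projectors), for $1\le k\le d$. Then for every $k$, $C^k\to C_2^k$ and $C_2^k\to C^k$. In particular $\mathcal C_2=\{C_2^k\}_{k=1}^d\cup\{\Omega\}$ is a currency for $S^\Omega$ with value function $\mathrm{Val}(C_2^k)=\log d-\log k$, $\mathrm{Val}(\Omega)=0$.
   Context: $\Omega$ is the set of density operators on a Hilbert space of dimension $d$; $S^\Omega$ the set of its non-empty subsets; $\Pi^k=\sum_{i=1}^k\ket i\bra i$. Allowed transformations: $f_{\mathcal E}(V)=\{\mathcal E(\rho):\rho\in V\}$ for unital CPTP maps $\mathcal E$; $V\to W$ iff some such $\mathcal E$ has $\mathcal E(\rho)\in W$ for all $\rho\in V$. Logarithms base 2. A subset $\mathcal C$ is a currency for target $\mathcal S$ if (Order) any two elements of $\mathcal C$ are comparable under $\to$ and $\Omega\in\mathcal C$; (Universality) $\Omega\in\mathcal S$ and every $V\in\mathcal S$ has $C,C'\in\mathcal C$ with $C\to V$, $V\to C'$. A value function $\mathrm{Val}:\mathcal C\to\mathbb R_{\ge0}$ satisfies $\mathrm{Val}(C')\ge\mathrm{Val}(C)\iff C'\to C$ and $\mathrm{Val}(\Omega)=0$. *)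

(* Defs.v *)
From HB Require Import structures.
From mathcomp Require Import all_boot all_order all_algebra.
From Stdlib Require Rdefinitions Raxioms Rpower.
Set Implicit Arguments. Unset Strict Implicit. Unset Printing Implicit Defensive.
Import Order.TTheory GRing.Theory Num.Theory.
Local Open Scope ring_scope.

Section QRT.
Variables (C : numClosedFieldType) (d : nat).

Definition adjmx m n (A : 'M[C]_(m, n)) : 'M[C]_(n, m) := (map_mx Num.conj A)^T.

Definition psd n (A : 'M[C]_n) : Prop :=
  forall v : 'cV[C]_n, 0 <= (adjmx v *m A *m v) 0 0.

Definition mset := 'M[C]_d -> Prop.
Definition Omega : mset := fun rho => psd rho /\ \tr rho = 1.

(* complete positivity: for every n, id_n (x) E maps psd (n x n block)
   matrices to psd matrices *)
Definition completely_positive (E : 'M[C]_d -> 'M[C]_d) : Prop :=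
  forall (n : nat) (X : 'I_n -> 'I_n -> 'M[C]_d),
    psd (\mxblock_(i < n, j < n) X i j) ->
    psd (\mxblock_(i < n, j < n) E (X i j)).

Definition unital_CPTP (E : 'M[C]_d -> 'M[C]_d) : Prop :=
  (forall (a : C) (x y : 'M[C]_d), E (a *: x + y) = a *: E x + E y) /\
  completely_positive E /\
  (forall rho, \tr (E rho) = \tr rho) /\
  E 1%:M = 1%:M.

Definition arrow (V W : mset) : Prop :=
  exists E, unital_CPTP E /\ forall rho, V rho -> W (E rho).

Definition SOmega (V : mset) : Prop :=
  (forall rho, V rho -> Omega rho) /\ exists rho, V rho.

(* Pi^k = sum_{i<k} |i><i| (basis indexed 0..d-1) *)
Definition Pi (k : nat) : 'M[C]_d :=
  \sum_(i < d | (i < k)%N) delta_mx i i.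

Definition Ck (k : nat) : mset := fun rho => rho = (k%:R)^-1 *: Pi k.

Definition C2k (k : nat) : mset := fun rho =>
  exists p : 'I_d -> C,
    (forall i, 0 <= p i) /\ \sum_(i < d | (i < k)%N) p i = 1 /\
    rho = \sum_(i < d | (i < k)%N) p i *: delta_mx i i.

Definition C2fam (V : mset) : Prop :=
  V = Omega \/ exists k, (1 <= k <= d)%N /\ V = C2k k.

Definition currency (Cf S : mset -> Prop) : Prop :=
  ((forall V W, Cf V -> Cf W -> arrow V W \/ arrow W V) /\ Cf Omega) /\
  (S Omega /\ forall V, S V -> exists W W', Cf W /\ Cf W' /\ arrow W V /\ arrow V W').

Definition value_function (Cf : mset -> Prop) (Val : mset -> Rdefinitions.R) : Prop :=
  (forall V, Cf V -> Rdefinitions.Rle Rdefinitions.R0 (Val V)) /\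
  (forall V W, Cf V -> Cf W -> (Rdefinitions.Rge (Val W) (Val V) <-> arrow W V)) /\
  Val Omega = Rdefinitions.R0.

End QRT.

Definition log2 (x : Rdefinitions.R) : Rdefinitions.R :=
  Rdefinitions.Rdiv (Rpower.ln x) (Rpower.ln (Raxioms.INR 2)).

(* Main.v *)
Require Import Defs.
From HB Require Import structures.
From mathcomp Require Import all_boot all_order all_algebra all_fingroup.
From mathcomp Require Import ring.
From Stdlib Require Rdefinitions Raxioms Rpower RIneq Rfunctions Lra Lia.
From Stdlib Require Import ClassicalEpsilon.
Set Implicit Arguments. Unset Strict Implicit. Unset Printing Implicit Defensive.
Import Order.TTheory GRing.Theory Num.Theory.
Local Open Scope ring_scope.

Lemma adjmx_mul {C : numClosedFieldType} m n p (A : 'M[C]_(m, n)) (B : 'M[C]_(n, p)) :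
  adjmx (A *m B) = adjmx B *m adjmx A.
Proof. by rewrite /adjmx map_mxM trmx_mul. Qed.

Lemma adjmxK {C : numClosedFieldType} m n (A : 'M[C]_(m, n)) : adjmx (adjmx A) = A.
Proof. by apply/matrixP=> i j; rewrite !mxE conjCK. Qed.

Lemma adjmxD {C : numClosedFieldType} m n (A B : 'M[C]_(m, n)) :
  adjmx (A + B) = adjmx A + adjmx B.
Proof. by apply/matrixP=> i j; rewrite !mxE rmorphD. Qed.

Lemma adjmxZ {C : numClosedFieldType} m n a (A : 'M[C]_(m, n)) :
  adjmx (a *: A) = a^* *: adjmx A.
Proof. by apply/matrixP=> i j; rewrite !mxE rmorphM. Qed.

Lemma adjmx1 {C : numClosedFieldType} n : adjmx (1%:M : 'M[C]_n) = 1%:M.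
Proof. by apply/matrixP=> i j; rewrite !mxE rmorph_nat eq_sym. Qed.

Lemma adjmx_delta {C : numClosedFieldType} m n (i : 'I_m) (j : 'I_n) :
  adjmx (delta_mx i j : 'M[C]_(m,n)) = delta_mx j i.
Proof.
by apply/matrixP=> a b; rewrite !mxE rmorph_nat andbC.
Qed.

Lemma psd_conj {C : numClosedFieldType} m n (M : 'M[C]_(m, n)) (A : 'M[C]_n) :
  psd A -> psd (M *m A *m adjmx M).
Proof.
move=> hA v; have := hA (adjmx M *m v).
by rewrite adjmx_mul adjmxK !mulmxA.
Qed.

Lemma psd_add {C : numClosedFieldType} n (A B : 'M[C]_n) :
  psd A -> psd B -> psd (A + B).
Proof.
move=> hA hB v; rewrite mulmxDr mulmxDl mxE.
exact: addr_ge0.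
Qed.

Lemma psd_scale {C : numClosedFieldType} n c (A : 'M[C]_n) :
  0 <= c -> psd A -> psd (c *: A).
Proof.
move=> hc hA v; rewrite -scalemxAr -scalemxAl mxE.
exact: mulr_ge0.
Qed.

Lemma psd0 {C : numClosedFieldType} n : psd (0 : 'M[C]_n).
Proof. by move=> v; rewrite mulmx0 mul0mx mxE. Qed.

Lemma psd_sum {C : numClosedFieldType} n (I : finType) (F : I -> 'M[C]_n) :
  (forall i, psd (F i)) -> psd (\sum_i F i).
Proof.
move=> h; elim/big_ind: _ => //; [exact: psd0| exact: psd_add].
Qed.

Lemma quadE {C : numClosedFieldType} n (A : 'M[C]_n) (a b : 'I_n) :
  (adjmx (delta_mx a 0 : 'cV[C]_n) *m A *m (delta_mx b 0 : 'cV[C]_n)) 0 0 = A a b.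
Proof.
rewrite adjmx_delta -(rowE a A) -(colE b) !mxE.
done.
Qed.

Lemma psd_diag {C : numClosedFieldType} n (A : 'M[C]_n) a : psd A -> 0 <= A a a.
Proof. by move=> h; rewrite -quadE. Qed.

Lemma adjmx_mxdiag {C : numClosedFieldType} (p : nat) (p_ : 'I_p -> nat)
  (B_ : forall i, 'M[C]_(p_ i)) :
  adjmx (\mxdiag_i B_ i) = \mxdiag_i adjmx (B_ i).
Proof.
rewrite /adjmx.
have -> : map_mx Num.conj (\mxdiag_i B_ i) = \mxdiag_i (map_mx Num.conj (B_ i)).
  apply/matrixP=> s t; rewrite !mxE.
  case: eqVneq => [e|ne].
    have h := map_conform_mx Num.conj (B_ (tagnat.sig1 s)) (0 : 'M[C]_(p_ (tagnat.sig1 s), p_ (tagnat.sig1 t))).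
    by rewrite map_mx0 in h; rewrite -h mxE.
  by rewrite !mxE conjC0.
by rewrite tr_mxdiag.
Qed.

Definition kraus {C : numClosedFieldType} {d : nat} (I : finType) (c : I -> C)
  (M : I -> 'M[C]_d) (X : 'M[C]_d) : 'M[C]_d :=
  \sum_i c i *: (M i *m X *m adjmx (M i)).

Lemma kraus_CP {C : numClosedFieldType} {d : nat} (I : finType) (c : I -> C)
  (M : I -> 'M[C]_d) : (forall i, 0 <= c i) -> completely_positive (kraus c M).
Proof.
move=> hc n X hX.
have -> : (\mxblock_(i < n, j < n) kraus c M (X i j)) =
  \sum_k c k *: (\mxdiag_(i < n) M k *m \mxblock_(i < n, j < n) X i j
                 *m adjmx (\mxdiag_(i < n) M k)).
  under [RHS]eq_bigr => k _ do rewrite adjmx_mxdiag mul_mxdiag_mxblock mul_mxblock_mxdiag.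
  apply/matrixP=> s t; rewrite !mxE /kraus !summxE; apply: eq_bigr => k _.
  by rewrite !mxE.
apply: psd_sum => k; apply: psd_scale => //; exact: psd_conj.
Qed.

Lemma mul_delta_l {R : comNzRingType} m n p (a : 'I_m) (b : 'I_n) (X : 'M[R]_(n, p)) s t :
  (delta_mx a b *m X) s t = (s == a)%:R * X b t.
Proof.
rewrite !mxE (bigD1 b) //= big1 ?addr0; first by rewrite !mxE eqxx andbT.
by move=> k nk; rewrite !mxE (negbTE nk) andbF mul0r.
Qed.

Lemma mul_delta_r {R : comNzRingType} m n p (a : 'I_n) (b : 'I_p) (X : 'M[R]_(m, n)) s t :
  (X *m delta_mx a b) s t = X s a * (t == b)%:R.
Proof.
rewrite !mxE (bigD1 a) //= big1 ?addr0; first by rewrite !mxE eqxx.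
by move=> k nk; rewrite !mxE (negbTE nk) mulr0.
Qed.

Lemma delta_sandwich {C : numClosedFieldType} n (a b : 'I_n) (X : 'M[C]_n) :
  delta_mx a b *m X *m adjmx (delta_mx a b) = X b b *: delta_mx a a.
Proof.
rewrite adjmx_delta; apply/matrixP=> s t.
rewrite mul_delta_r mul_delta_l !mxE.
by case: (s == a); case: (t == a); rewrite /= ?mul1r ?mul0r ?mulr1 ?mulr0.
Qed.

Lemma kraus_lin {C : numClosedFieldType} {d : nat} (I : finType) (c : I -> C)
  (M : I -> 'M[C]_d) a x y : kraus c M (a *: x + y) = a *: kraus c M x + kraus c M y.
Proof.
rewrite /kraus scaler_sumr -big_split /=; apply: eq_bigr => i _.
by rewrite mulmxDr mulmxDl -scalemxAr -scalemxAl scalerDr !scalerA mulrC.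
Qed.

Lemma kraus_tr {C : numClosedFieldType} {d : nat} (I : finType) (c : I -> C)
  (M : I -> 'M[C]_d) : \sum_i c i *: (adjmx (M i) *m M i) = 1%:M ->
  forall X, \tr (kraus c M X) = \tr X.
Proof.
move=> h X; rewrite /kraus raddf_sum /=.
under eq_bigr => i _ do rewrite mxtraceZ -mulmxA mxtrace_mulC -mulmxA.
rewrite -{2}[X]mulmx1 -h mulmx_sumr raddf_sum /=; apply: eq_bigr => i _.
by rewrite -scalemxAr mxtraceZ.
Qed.

Lemma kraus_unital {C : numClosedFieldType} {d : nat} (I : finType) (c : I -> C)
  (M : I -> 'M[C]_d) : \sum_i c i *: (M i *m adjmx (M i)) = 1%:M ->
  kraus c M 1%:M = 1%:M.
Proof. by move=> h; rewrite /kraus -{2}h; apply: eq_bigr => i _; rewrite mulmx1. Qed.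

Lemma kraus_uCPTP {C : numClosedFieldType} {d : nat} (I : finType) (c : I -> C)
  (M : I -> 'M[C]_d) : (forall i, 0 <= c i) ->
  \sum_i c i *: (adjmx (M i) *m M i) = 1%:M ->
  \sum_i c i *: (M i *m adjmx (M i)) = 1%:M ->
  unital_CPTP (kraus c M).
Proof.
move=> h0 h1 h2; split; first exact: kraus_lin.
split; first exact: kraus_CP.
split; first exact: kraus_tr.
exact: kraus_unital.
Qed.

Lemma id_uCPTP {C : numClosedFieldType} {d : nat} : unital_CPTP (fun X : 'M[C]_d => X).
Proof. by split=> //; split=> //. Qed.

Lemma count_lt {C : numClosedFieldType} (d k : nat) : (k <= d)%N ->
  \sum_(i < d | (i < k)%N) (1 : C) = k%:R.
Proof.
move=> hk.
have := @big_ord_widen_cond C 0 +%R k d xpredT (fun _ => (1:C)) hk.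
by rewrite /= => <-; rewrite sumr_const card_ord.
Qed.

Definition tw_c {C : numClosedFieldType} {d : nat} (k : nat) (p : 'I_d * 'I_d) : C :=
  if (p.1 < k)%N && (p.2 < k)%N then k%:R^-1
  else if (p.1 == p.2) && (k <= p.1)%N then 1 else 0.

Definition tw_M {C : numClosedFieldType} {d : nat} (p : 'I_d * 'I_d) : 'M[C]_d :=
  delta_mx p.1 p.2.

Lemma pair_sum {C : numClosedFieldType} {d : nat} (F : 'I_d * 'I_d -> 'M[C]_d) :
  \sum_p F p = \sum_i \sum_j F (i, j).
Proof. by rewrite pair_big; apply: eq_bigr => -[i j]. Qed.

Lemma tw_c_row {C : numClosedFieldType} {d : nat} (k : nat) (i : 'I_d) (f : 'I_d -> C) :
  \sum_j tw_c k (i, j) * f j =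
  if (i < k)%N then k%:R^-1 * \sum_(j < d | (j < k)%N) f j else f i.
Proof.
rewrite /tw_c /=; case hi: (i < k)%N => /=.
  rewrite mulr_sumr [RHS]big_mkcond; apply: eq_bigr => j _ /=.
  by rewrite [(k <= i)%N]leqNgt hi andbF; case: (j < k)%N; rewrite ?mul0r.
rewrite (bigD1 i) //= eqxx [(k <= i)%N]leqNgt hi mul1r big1 ?addr0 // => j nj.
by rewrite eq_sym (negbTE nj) mul0r.
Qed.

Lemma tw_apply {C : numClosedFieldType} {d : nat} (k : nat) (X : 'M[C]_d) :
  kraus (tw_c k) tw_M X =
  \sum_(i < d) (if (i < k)%N then k%:R^-1 * \sum_(j < d | (j < k)%N) X j j else X i i)
    *: delta_mx i i.
Proof.
rewrite /kraus pair_sum; apply: eq_bigr => i _.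
under eq_bigr => j _ do rewrite /tw_M /= delta_sandwich scalerA.
by rewrite -scaler_suml tw_c_row.
Qed.

Lemma tw_c_sym {C : numClosedFieldType} {d : nat} (k : nat) (i j : 'I_d) :
  tw_c k (i, j) = tw_c k (j, i) :> C.
Proof.
rewrite /tw_c /= andbC eq_sym; case: eqVneq => [->|] //=.
Qed.

Lemma tw_c_sum1 {C : numClosedFieldType} {d : nat} (k : nat) (j : 'I_d) :
  (k <= d)%N -> \sum_i tw_c k (j, i) = 1 :> C.
Proof.
move=> hk; have := tw_c_row k j (fun _ => (1:C)).
under eq_bigr do rewrite mulr1.
move=> ->; case: ifP => // hj.
rewrite count_lt // mulVf // pnatr_eq0 -lt0n.
exact: leq_ltn_trans (leq0n j) hj.
Qed.

Lemma tw_TP {C : numClosedFieldType} {d : nat} (k : nat) : (k <= d)%N ->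
  \sum_p tw_c k p *: (adjmx (tw_M p) *m tw_M p) = (1%:M : 'M[C]_d).
Proof.
move=> hk; rewrite pair_sum exchange_big /= mx1_sum_delta; apply: eq_bigr => j _.
under eq_bigr => i _ do rewrite /tw_M /= adjmx_delta mul_delta_mx tw_c_sym.
by rewrite -scaler_suml tw_c_sum1 ?scale1r.
Qed.

Lemma tw_U {C : numClosedFieldType} {d : nat} (k : nat) : (k <= d)%N ->
  \sum_p tw_c k p *: (tw_M p *m adjmx (tw_M p)) = (1%:M : 'M[C]_d).
Proof.
move=> hk; rewrite pair_sum /= mx1_sum_delta; apply: eq_bigr => j _.
under eq_bigr => i _ do rewrite /tw_M /= adjmx_delta mul_delta_mx.
by rewrite -scaler_suml tw_c_sum1 ?scale1r.
Qed.

Lemma tw_c_ge0 {C : numClosedFieldType} {d : nat} (k : nat) p : 0 <= tw_c (C:=C) (d:=d) k p.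
Proof.
rewrite /tw_c; case: ifP => _; first by rewrite invr_ge0 ler0n.
by case: ifP.
Qed.

Lemma tw_uCPTP {C : numClosedFieldType} {d : nat} (k : nat) : (k <= d)%N ->
  unital_CPTP (kraus (tw_c (C:=C) (d:=d) k) tw_M).
Proof.
move=> hk; apply: kraus_uCPTP; [exact: tw_c_ge0|exact: tw_TP|exact: tw_U].
Qed.

Lemma diag_entry {C : numClosedFieldType} {d : nat} (a : nat) (p : 'I_d -> C) (j : 'I_d) :
  (\sum_(i < d | (i < a)%N) p i *: delta_mx i i) j j = if (j < a)%N then p j else 0.
Proof.
rewrite summxE big_mkcond (bigD1 j) //= big1 ?addr0.
  by case: ifP; rewrite // !mxE eqxx mulr1.
move=> i ni; case: ifP => // _; rewrite !mxE.
by rewrite eq_sym (negbTE ni) mulr0.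
Qed.

Lemma Pi_eq {C : numClosedFieldType} {d : nat} (k : nat) :
  (k%:R^-1 *: Pi C d k) = \sum_(i < d) (if (i < k)%N then k%:R^-1 else 0) *: delta_mx i i.
Proof.
rewrite /Pi scaler_sumr big_mkcond; apply: eq_bigr => i _.
by case: ifP; rewrite ?scale0r.
Qed.

Lemma tw_C2k {C : numClosedFieldType} {d : nat} (a k : nat) (rho : 'M[C]_d) :
  (a <= k)%N -> C2k a rho -> kraus (tw_c k) tw_M rho = k%:R^-1 *: Pi C d k.
Proof.
move=> hak [p [hp [hs ->]]]; rewrite tw_apply Pi_eq; apply: eq_bigr => i _.
congr (_ *: _); case: ifP => hi.
  under eq_bigr => j hj do rewrite diag_entry.
  rewrite -big_mkcondr /=.
  have -> : \sum_(j < d | (j < k)%N && (j < a)%N) p j = \sum_(j < d | (j < a)%N) p j.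
    apply: eq_bigl => j; case: (ltnP j a) => h; rewrite ?andbT ?andbF //.
    exact: leq_trans h hak.
  by rewrite hs mulr1.
rewrite diag_entry; case: ifP => // h.
by move: hi; rewrite (leq_trans h hak).
Qed.

Lemma tw_Omega {C : numClosedFieldType} {d : nat} (rho : 'M[C]_d) :
  Omega rho -> kraus (tw_c d) tw_M rho = d%:R^-1 *: Pi C d d.
Proof.
move=> [_ htr]; rewrite tw_apply Pi_eq; apply: eq_bigr => i _.
rewrite ltn_ord; congr (_ *: _).
have -> : \sum_(j < d | (j < d)%N) rho j j = \tr rho.
  by rewrite /mxtrace; apply: eq_bigl => j; rewrite ltn_ord.
by rewrite htr mulr1.
Qed.

Lemma Ck_C2k {C : numClosedFieldType} {d : nat} (k : nat) (rho : 'M[C]_d) :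
  (1 <= k <= d)%N -> Ck k rho -> C2k k rho.
Proof.
move=> /andP[hk1 hkd] ->; exists (fun _ => k%:R^-1); split.
  by move=> _; rewrite invr_ge0 ler0n.
split.
  rewrite -[k%:R^-1]mul1r -mulr_suml count_lt // mulfV // pnatr_eq0 -lt0n //.
by rewrite /Pi scaler_sumr.
Qed.

Lemma psd1 {C : numClosedFieldType} n : psd (1%:M : 'M[C]_n).
Proof.
move=> v; rewrite mulmx1 !mxE; apply: sumr_ge0 => k _.
by rewrite !mxE mulrC mul_conjC_ge0.
Qed.

Lemma psd_diagmx {C : numClosedFieldType} {d : nat} (f : 'I_d -> C) :
  (forall i, 0 <= f i) -> psd (\sum_i f i *: delta_mx i i).
Proof.
move=> hf; apply: psd_sum => i; apply: psd_scale => //.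
have -> : (delta_mx i i : 'M[C]_d) = delta_mx i 0 *m 1%:M *m adjmx (delta_mx i 0 : 'cV[C]_d).
  by rewrite mulmx1 adjmx_delta mul_delta_mx.
exact/psd_conj/psd1.
Qed.

Lemma tr_delta {C : numClosedFieldType} n (i : 'I_n) : \tr (delta_mx i i : 'M[C]_n) = 1.
Proof.
rewrite /mxtrace (bigD1 i) //= big1 ?addr0; first by rewrite mxE !eqxx.
by move=> j nj; rewrite mxE (negbTE nj).
Qed.

Lemma C2k_Omega {C : numClosedFieldType} {d : nat} (k : nat) (rho : 'M[C]_d) :
  C2k k rho -> Omega rho.
Proof.
move=> [p [hp [hs ->]]]; split.
  rewrite big_mkcond /=.
  have -> : \sum_(i < d) (if (i < k)%N then p i *: delta_mx i i else 0) =
            \sum_(i < d) (if (i < k)%N then p i else 0) *: (delta_mx i i : 'M[C]_d).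
    by apply: eq_bigr => i _; case: ifP; rewrite ?scale0r.
  by apply: psd_diagmx => i; case: ifP.
rewrite raddf_sum /=; under eq_bigr do rewrite mxtraceZ tr_delta mulr1.
exact: hs.
Qed.

Lemma arrow_sub {C : numClosedFieldType} {d : nat} (V W : mset C d) :
  (forall rho, V rho -> W rho) -> arrow V W.
Proof. by move=> h; exists (fun X => X); split; [exact: id_uCPTP|]. Qed.

Lemma arrow_Ck_C2k {C : numClosedFieldType} {d : nat} (k : nat) :
  (1 <= k <= d)%N -> arrow (Ck (C:=C) (d:=d) k) (C2k k).
Proof. by move=> hk; apply: arrow_sub => rho; apply: Ck_C2k. Qed.

Lemma arrow_C2k_Ck {C : numClosedFieldType} {d : nat} (k : nat) :
  (1 <= k <= d)%N -> arrow (C2k (C:=C) (d:=d) k) (Ck k).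
Proof.
move=> /andP[_ hk]; exists (kraus (tw_c k) tw_M); split; first exact: tw_uCPTP.
by move=> rho h; rewrite /Ck (tw_C2k (leqnn k) h).
Qed.

Lemma arrow_C2k_le {C : numClosedFieldType} {d : nat} (a b : nat) :
  (a <= b)%N -> (1 <= b <= d)%N -> arrow (C2k (C:=C) (d:=d) a) (C2k b).
Proof.
move=> hab hb; have /andP[_ hbd] := hb.
exists (kraus (tw_c b) tw_M); split; first exact: tw_uCPTP.
by move=> rho h; apply: Ck_C2k => //; rewrite /Ck (tw_C2k hab h).
Qed.

Lemma arrow_C2k_Omega {C : numClosedFieldType} {d : nat} (k : nat) :
  arrow (C2k (C:=C) (d:=d) k) (Omega (C:=C) (d:=d)).
Proof. by apply: arrow_sub => rho; apply: C2k_Omega. Qed.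

Lemma arrow_Omega_Omega {C : numClosedFieldType} {d : nat} :
  arrow (Omega (C:=C) (d:=d)) (Omega (C:=C) (d:=d)).
Proof. exact: arrow_sub. Qed.

Lemma arrow_Omega_C2d {C : numClosedFieldType} {d : nat} : (0 < d)%N ->
  arrow (Omega (C:=C) (d:=d)) (C2k d).
Proof.
move=> hd; exists (kraus (tw_c d) tw_M); split; first exact: tw_uCPTP.
by move=> rho h; apply: Ck_C2k; [rewrite hd leqnn|rewrite /Ck (tw_Omega h)].
Qed.

Lemma uCPTP_0 {C : numClosedFieldType} {d : nat} (E : 'M[C]_d -> 'M[C]_d) :
  unital_CPTP E -> E 0 = 0.
Proof.
move=> [hl _]; have := hl (-1) 0 0.
by rewrite scaler0 addr0 scaleN1r addNr.
Qed.

Lemma uCPTP_add {C : numClosedFieldType} {d : nat} (E : 'M[C]_d -> 'M[C]_d) :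
  unital_CPTP E -> forall x y, E (x + y) = E x + E y.
Proof. by move=> [hl _] x y; have := hl 1 x y; rewrite !scale1r. Qed.

Lemma uCPTP_scale {C : numClosedFieldType} {d : nat} (E : 'M[C]_d -> 'M[C]_d) :
  unital_CPTP E -> forall a x, E (a *: x) = a *: E x.
Proof.
move=> hE a x; have [hl _] := hE; have := hl a x 0.
by rewrite !addr0 (uCPTP_0 hE) addr0.
Qed.

Lemma uCPTP_sum {C : numClosedFieldType} {d : nat} (E : 'M[C]_d -> 'M[C]_d) :
  unital_CPTP E -> forall (I : finType) (P : pred I) (F : I -> 'M[C]_d),
  E (\sum_(i | P i) F i) = \sum_(i | P i) E (F i).
Proof.
move=> hE I P F; apply: (big_morph E (uCPTP_add hE) (uCPTP_0 hE)).
Qed.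

Lemma Omega_mixed {C : numClosedFieldType} {d : nat} : (0 < d)%N ->
  Omega (d%:R^-1 *: (1%:M : 'M[C]_d)).
Proof.
move=> hd; split; first by apply: psd_scale; [rewrite invr_ge0 ler0n|exact: psd1].
by rewrite mxtraceZ mxtrace1 mulVf // pnatr_eq0 -lt0n.
Qed.

Lemma arrow_Omega_C2k_inv {C : numClosedFieldType} {d : nat} (k : nat) :
  (0 < d)%N -> arrow (Omega (C:=C) (d:=d)) (C2k k) -> (d <= k)%N.
Proof.
move=> hd [E [hE h]]; have := h _ (Omega_mixed hd).
rewrite (uCPTP_scale hE) (proj2 (proj2 (proj2 hE))).
move=> [p [_ [_ e]]].
have hl0 : (d.-1 < d)%N by rewrite ltn_predL.
pose l : 'I_d := Ordinal hl0.
have := congr1 (fun M : 'M[C]_d => M l l) e.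
rewrite diag_entry !mxE eqxx mulr1 /=.
case: ifP => [hl _|_]; first by rewrite -ltnS (ltn_predK hd) in hl.
by move/eqP; rewrite invr_eq0 pnatr_eq0 => /eqP hd0; rewrite hd0 in hd.
Qed.

Lemma CP_pos {C : numClosedFieldType} {d : nat} (E : 'M[C]_d -> 'M[C]_d) :
  completely_positive E -> forall X, psd X -> psd (E X).
Proof.
move=> hE X hX.
pose Cm := \mxcol_(i < 1) (1%:M : 'M[C]_d).
pose Rm := \mxrow_(j < 1) (1%:M : 'M[C]_d).
have hR : Rm = adjmx Cm.
  by apply/matrixP => s t; rewrite !mxE; case: (tagnat.sig1 t) => -[|] // ?; rewrite rmorph_nat eq_sym.
have blk : forall Y : 'M[C]_d, \mxblock_(i < 1, j < 1) Y = Cm *m Y *m adjmx Cm.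
  move=> Y; rewrite -hR /Cm /Rm mxcol_mul mul_mxcol_mxrow.
  by apply: eq_mxblock => i j; rewrite mul1mx mulmx1.
have RC : Rm *m Cm = 1%:M by rewrite mul_mxrow_mxcol big_ord1 mulmx1.
have := hE 1%N (fun _ _ => X); rewrite blk => /(_ (psd_conj Cm hX)).
rewrite blk => /(psd_conj Rm).
by rewrite hR (adjmxK Cm) !mulmxA -hR RC mul1mx -mulmxA RC mulmx1.
Qed.

Lemma delta_C2k {C : numClosedFieldType} {d : nat} (a : nat) (i : 'I_d) :
  (i < a)%N -> C2k (C:=C) a (delta_mx i i).
Proof.
move=> hi; exists (fun j => (j == i)%:R); split; first by move=> j; rewrite ler0n.
split.
  rewrite (bigD1 i) //= eqxx big1 ?addr0 // => j /andP[_ nj].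
  by rewrite (negbTE nj).
rewrite (bigD1 i) //= eqxx scale1r big1 ?addr0 // => j /andP[_ nj].
by rewrite (negbTE nj) scale0r.
Qed.

Lemma tr_Pi {C : numClosedFieldType} {d : nat} (a : nat) : (a <= d)%N ->
  \tr (Pi C d a) = a%:R.
Proof.
move=> ha; rewrite /Pi raddf_sum -(count_lt (C:=C) ha); apply: eq_bigr => i _.
exact: tr_delta.
Qed.

Lemma one_minus_Pi {C : numClosedFieldType} {d : nat} (a : nat) :
  1%:M - Pi C d a = \sum_(i < d) (if (i < a)%N then 0 else 1) *: delta_mx i i.
Proof.
rewrite mx1_sum_delta /Pi [X in _ - X]big_mkcond -sumrB; apply: eq_bigr => i _.
by case: ifP; rewrite ?scale0r ?scale1r ?subrr ?subr0.
Qed.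

Lemma arrow_C2k_inv {C : numClosedFieldType} {d : nat} (a b : nat) :
  (a <= d)%N -> arrow (C2k (C:=C) (d:=d) a) (C2k b) -> (a <= b)%N.
Proof.
move=> had [E [hE h]].
case: (leqP b d) => hbd; last by apply: ltnW; exact: leq_ltn_trans had hbd.
set Y := E (Pi C d a).
have hY : Y = \sum_(i < d | (i < a)%N) E (delta_mx i i) by rewrite /Y /Pi (uCPTP_sum hE).
have trY : \tr Y = a%:R by rewrite /Y (proj1 (proj2 (proj2 hE))) tr_Pi.
have Y0 : forall l : 'I_d, ~~ (l < b)%N -> Y l l = 0.
  move=> l hl; rewrite hY summxE big1 // => i hi.
  have [p [_ [_ ->]]] := h _ (delta_C2k hi).
  by rewrite diag_entry (negbTE hl).
have Y1 : forall l : 'I_d, Y l l <= 1.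
  move=> l.
  have hp : psd (E (1%:M - Pi C d a)).
    apply: (CP_pos (proj1 (proj2 hE))); rewrite one_minus_Pi; apply: psd_diagmx.
    by move=> i; case: ifP.
  have := psd_diag l hp.
  have e : E (1%:M - Pi C d a) = 1%:M - Y.
    by rewrite (uCPTP_add hE) -scaleN1r (uCPTP_scale hE) scaleN1r (proj2 (proj2 (proj2 hE))).
  by rewrite e !mxE eqxx subr_ge0.
have : a%:R <= b%:R :> C.
  rewrite -trY /mxtrace -(count_lt (C:=C) hbd).
  rewrite (bigID (fun l : 'I_d => (l < b)%N)) /= [X in _ + X]big1 ?addr0; last first.
    by move=> l hl; apply: Y0.
  by apply: ler_sum => l _; exact: Y1.
by rewrite ler_nat.
Qed.

Definition qf {C : numClosedFieldType} n (A : 'M[C]_n) (v : 'cV[C]_n) : C :=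
  (adjmx v *m A *m v) 0 0.

Lemma entryD {C : numClosedFieldType} m n (M N : 'M[C]_(m, n)) i j :
  (M + N) i j = M i j + N i j.
Proof. by rewrite mxE. Qed.

Lemma entryZ {C : numClosedFieldType} m n c (M : 'M[C]_(m, n)) i j :
  (c *: M) i j = c * M i j.
Proof. by rewrite mxE. Qed.

Lemma qf_expand {C : numClosedFieldType} n (A : 'M[C]_n) (i j : 'I_n) (c : C) :
  qf A (delta_mx i 0 + c *: delta_mx j 0) =
  A i i + c * A i j + c^* * A j i + c^* * c * A j j.
Proof.
rewrite /qf adjmxD adjmxZ !mulmxDl !mulmxDr -!scalemxAl -!scalemxAr.
rewrite !entryD !entryZ !quadE.
by ring.
Qed.

Lemma psd_herm {C : numClosedFieldType} n (A : 'M[C]_n) (i j : 'I_n) :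
  psd A -> A j i = (A i j)^*.
Proof.
move=> hA.
have hq : forall c : C, (qf A (delta_mx i 0 + c *: delta_mx j 0))^* =
                        qf A (delta_mx i 0 + c *: delta_mx j 0).
  by move=> c; apply: geC0_conj; apply: hA.
have hii : (A i i)^* = A i i by apply: geC0_conj; apply: psd_diag.
have hjj : (A j j)^* = A j j by apply: geC0_conj; apply: psd_diag.
have e1 := hq 1; have e2 := hq 'i.
rewrite !qf_expand !rmorphD !rmorphM /= !conjCK hii hjj conjC1 in e1 e2.
rewrite conjCi in e2.
set a := A i j in e1 e2 *; set b := A j i in e1 e2 *.
have e1' : a^* + b^* = a + b.
  by move: e1 => /eqP; rewrite -subr_eq0 => /eqP h; apply/eqP; rewrite -subr_eq0; apply/eqP; rewrite -h; ring.
have e2' : 'i * (b^* - a^*) = 'i * (a - b).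
  by move: e2 => /eqP; rewrite -subr_eq0 => /eqP h; apply/eqP; rewrite -subr_eq0; apply/eqP; rewrite -h; ring.
have e3 : b^* - a^* = a - b by apply: (mulfI (neq0Ci C)).
have hb : b^* = a.
  apply: (@mulfI _ 2%:R); first by rewrite pnatr_eq0.
  transitivity ((a^* + b^*) + (b^* - a^*)); first by ring.
  by rewrite e1' e3; ring.
by rewrite -hb conjCK.
Qed.

Lemma psd_normal {C : numClosedFieldType} n (A : 'M[C]_n) :
  psd A -> A \is normalmx.
Proof.
move=> hA.
have e : (A ^t* )%sesqui = A.
  by apply/matrixP => i j; rewrite !mxE (psd_herm j i hA).
by rewrite qualifE e.
Qed.

Lemma psd_spectral {C : numClosedFieldType} n (A : 'M[C]_n) : psd A ->
  exists (U : 'M[C]_n) (lam : 'I_n -> C),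
    U *m adjmx U = 1%:M /\ adjmx U *m U = 1%:M /\
    A = adjmx U *m (\sum_i lam i *: delta_mx i i) *m U /\
    (forall i, 0 <= lam i) /\ \sum_i lam i = \tr A.
Proof.
move=> hA; have /orthomx_spectralP eA := psd_normal hA.
set U := spectralmx A in eA; set sp := spectral_diag A in eA.
have hU : U *m adjmx U = 1%:M.
  have /unitarymxP := spectral_unitarymx A.
  by rewrite /adjmx map_trmx.
have hU' : adjmx U *m U = 1%:M by apply: mulmx1C.
have eI : invmx U = adjmx U.
  by rewrite invmx_unitary ?spectral_unitarymx // /adjmx map_trmx.
rewrite eI in eA.
have eD : diag_mx sp = U *m A *m adjmx U.
  by rewrite eA !mulmxA hU mul1mx -mulmxA hU mulmx1.
exists U, (fun i => sp 0 i); split => //; split => //.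
split; first by rewrite -diag_mx_sum_delta.
split.
  move=> i; have := psd_diag i (psd_conj U hA).
  by rewrite -eD mxE eqxx mulr1n.
have eT : \tr (diag_mx sp) = \tr A.
  by rewrite eD -mulmxA mxtrace_mulC -mulmxA hU' mulmx1.
rewrite -eT.
by rewrite /mxtrace; apply: eq_bigr => i _; rewrite mxE eqxx mulr1n.
Qed.


Lemma sum_delta_perm {C : numClosedFieldType} n (s : {perm 'I_n}) :
  \sum_l (delta_mx (s l) (s l) : 'M[C]_n) = 1%:M.
Proof.
rewrite mx1_sum_delta; symmetry.
exact: (reindex_inj (h := s) (@perm_inj _ s)).
Qed.

Lemma univ_channel {C : numClosedFieldType} {d : nat} (rho : 'M[C]_d) (z : 'I_d) :
  Omega rho -> exists E, unital_CPTP E /\ E (delta_mx z z) = rho.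
Proof.
move=> [hpsd htr].
have [U [lam [hU [hU' [erho [hlam hsum]]]]]] := psd_spectral hpsd.
rewrite htr in hsum.
pose c := fun p : 'I_d * 'I_d => lam p.1.
pose M := fun p : 'I_d * 'I_d => adjmx U *m delta_mx (tperm z p.1 p.2) p.2.
have hS : forall p X, M p *m X *m adjmx (M p) =
    adjmx U *m (X p.2 p.2 *: delta_mx (tperm z p.1 p.2) (tperm z p.1 p.2)) *m U.
  move=> p X; rewrite /M adjmx_mul adjmxK -delta_sandwich.
  by rewrite !mulmxA.
have hMM : forall p, M p *m adjmx (M p) =
    adjmx U *m delta_mx (tperm z p.1 p.2) (tperm z p.1 p.2) *m U.
  by move=> p; rewrite -{1}[M p]mulmx1 hS !mxE eqxx mulr1n scale1r.
have hMM' : forall p, adjmx (M p) *m M p = delta_mx p.2 p.2.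
  move=> p; rewrite /M adjmx_mul adjmxK adjmx_delta !mulmxA.
  by rewrite -[_ *m U *m _]mulmxA hU mulmx1 mul_delta_mx.
exists (kraus c M); split.
  apply: kraus_uCPTP.
  - by move=> p; apply: hlam.
  - rewrite pair_sum.
    under eq_bigr => j _ do under eq_bigr => l _ do rewrite hMM' /=.
    rewrite /c /=.
    under eq_bigr => j _ do rewrite -scaler_sumr -mx1_sum_delta.
    by rewrite -scaler_suml hsum scale1r.
  - rewrite pair_sum.
    under eq_bigr => j _ do under eq_bigr => l _ do rewrite hMM /= scalemxAl scalemxAr.
    rewrite /c /=.
    under eq_bigr => j _ do rewrite -mulmx_suml -mulmx_sumr -scaler_sumr sum_delta_perm.
    rewrite -mulmx_suml -mulmx_sumr -scaler_suml hsum scale1r mulmx1.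
    exact: hU'.
have hj : forall j, \sum_l c (j, l) *: (M (j, l) *m delta_mx z z *m adjmx (M (j, l))) =
    adjmx U *m (lam j *: delta_mx j j) *m U.
  move=> j; rewrite (bigD1 z) //= big1 ?addr0.
    by rewrite hS /= mxE !eqxx mulr1n scale1r tpermL scalemxAl scalemxAr.
  move=> l hl; rewrite hS /= mxE (negbTE hl) mulr0n scale0r.
  by rewrite mulmx0 mul0mx scaler0.
rewrite /kraus pair_sum; under eq_bigr => j _ do rewrite hj.
by rewrite -mulmx_suml -mulmx_sumr erho.
Qed.

Module RF.
Import Rdefinitions Raxioms Rpower RIneq Rfunctions Lra Lia.

Section Reals.
Local Open Scope R_scope.

Lemma ln2_pos : 0 < ln (INR 2).
Proof. rewrite <- ln_1. apply ln_increasing; simpl; lra. Qed.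

Lemma log2_le_iff (a b : nat) : (1 <= a)%coq_nat -> (1 <= b)%coq_nat ->
  (log2 (INR a) <= log2 (INR b) <-> (a <= b)%coq_nat).
Proof.
intros ha hb; unfold log2; have h2 := ln2_pos.
have pa : 0 < INR a by apply lt_0_INR; lia.
have pb : 0 < INR b by apply lt_0_INR; lia.
split.
- intros h. destruct (Nat.le_gt_cases a b) as [|hlt]; [assumption|].
  exfalso. have : ln (INR b) < ln (INR a) by apply ln_increasing; [|apply lt_INR]; auto.
  intros hl. apply (Rmult_le_compat_r (ln (INR 2))) in h; [|lra].
  unfold Rdiv in h. rewrite !Rmult_assoc Rinv_l in h; lra.
- intros h. apply Rmult_le_compat_r; [left; apply Rinv_0_lt_compat; lra|].
  apply Nat.lt_eq_cases in h; destruct h as [h|h].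
  + left; apply ln_increasing; [auto|apply lt_INR; auto].
  + subst; right; reflexivity.
Qed.

End Reals.

Lemma val_ge0 (k d : nat) : (1 <= k <= d)%nat ->
  Rle R0 (Rminus (log2 (INR d)) (log2 (INR k))).
Proof.
move=> /andP[/ssrnat.leP h1 /ssrnat.leP h2].
have := proj2 (@log2_le_iff k d h1 (Nat.le_trans _ _ _ h1 h2)) h2. intros; lra.
Qed.

Lemma val_cmp (a b d : nat) : (1 <= a <= d)%nat -> (1 <= b <= d)%nat ->
  (Rge (Rminus (log2 (INR d)) (log2 (INR b))) (Rminus (log2 (INR d)) (log2 (INR a)))
   <-> (b <= a)%nat).
Proof.
move=> /andP[/ssrnat.leP ha _] /andP[/ssrnat.leP hb _].
have := @log2_le_iff b a hb ha. intros [h1 h2]; split.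
- intros h; apply/ssrnat.leP; apply h1; lra.
- move=> /ssrnat.leP h; have := h2 h; intros; lra.
Qed.

Lemma val_zero (k d : nat) : (1 <= k <= d)%nat ->
  (Rge R0 (Rminus (log2 (INR d)) (log2 (INR k))) <-> (d <= k)%nat).
Proof.
move=> /andP[/ssrnat.leP hk /ssrnat.leP hkd].
have := @log2_le_iff d k (Nat.le_trans _ _ _ hk hkd) hk. intros [h1 h2]; split.
- intros h; apply/ssrnat.leP; apply h1; lra.
- move=> /ssrnat.leP h; have := h2 h; intros; lra.
Qed.


End RF.
Import RF.

Lemma sum_lt1 {C : numClosedFieldType} {d : nat} (hd : (0 < d)%N) (F : 'I_d -> 'M[C]_d) :
  \sum_(i < d | (i < 1)%N) F i = F (Ordinal hd).
Proof. by apply: big_pred1 => i; rewrite /= -val_eqE /= ltnS leqn0. Qed.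

Lemma C21_eq {C : numClosedFieldType} {d : nat} (hd : (0 < d)%N) (rho : 'M[C]_d) :
  C2k 1 rho -> rho = delta_mx (Ordinal hd) (Ordinal hd).
Proof.
move=> [p [_ [hs ->]]]; rewrite sum_lt1.
have : \sum_(i < d | (i < 1)%N) p i = p (Ordinal hd).
  by apply: big_pred1 => i; rewrite /= -val_eqE /= ltnS leqn0.
by rewrite hs => <-; rewrite scale1r.
Qed.

Lemma arrow_C21 {C : numClosedFieldType} {d : nat} (hd : (0 < d)%N) (V : mset C d) :
  SOmega V -> arrow (C2k 1) V.
Proof.
move=> [hV [rho hr]].
have [E [hE e]] := univ_channel (Ordinal hd) (hV _ hr).
exists E; split => // x /(C21_eq hd) ->; by rewrite e.
Qed.

Lemma C2k_inj {C : numClosedFieldType} {d : nat} (a b : nat) :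
  (a <= d)%N -> (b <= d)%N -> C2k (C:=C) (d:=d) a = C2k b -> a = b.
Proof.
move=> ha hb e; apply/eqP; rewrite eqn_leq; apply/andP; split.
  by apply: (arrow_C2k_inv ha); apply: arrow_sub => x hx; exact: (eq_ind _ (fun P : mset C d => P x) hx _ e).
by apply: (arrow_C2k_inv hb); apply: arrow_sub => x hx; exact: (eq_ind _ (fun P : mset C d => P x) hx _ (esym e)).
Qed.

Lemma Omega_C2k {C : numClosedFieldType} {d : nat} (k : nat) :
  (0 < d)%N -> (k <= d)%N -> Omega (C:=C) (d:=d) = C2k k -> k = d.
Proof.
move=> hd hk e; apply/eqP; rewrite eqn_leq hk /=.
by apply: (arrow_Omega_C2k_inv hd); apply: arrow_sub => x hx; exact: (eq_ind _ (fun P : mset C d => P x) hx _ e).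
Qed.

Theorem mainTheorem16 (C : numClosedFieldType) (d : nat) (hd : (0 < d)%N) :
  (forall k : nat, (1 <= k <= d)%N ->
     @arrow C d (@Ck C d k) (@C2k C d k) /\ @arrow C d (@C2k C d k) (@Ck C d k)) /\
  @currency C d (@C2fam C d) (@SOmega C d) /\
  (exists Val : mset C d -> Rdefinitions.R,
     Val (@Omega C d) = Rdefinitions.R0 /\
     forall k : nat, (1 <= k <= d)%N ->
       Val (@C2k C d k) =
         Rdefinitions.Rminus (log2 (Raxioms.INR d)) (log2 (Raxioms.INR k))) /\
  (forall Val : mset C d -> Rdefinitions.R,
     Val (@Omega C d) = Rdefinitions.R0 ->
     (forall k : nat, (1 <= k <= d)%N ->
       Val (@C2k C d k) =
         Rdefinitions.Rminus (log2 (Raxioms.INR d)) (log2 (Raxioms.INR k))) ->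
     @value_function C d (@C2fam C d) Val).
Proof.
have hd1 : (1 <= 1 <= d)%N by rewrite leqnn hd.
split.
  by move=> k hk; split; [apply: arrow_Ck_C2k | apply: arrow_C2k_Ck].
split.
  split; last first.
    split.
      split => //; exists (delta_mx (Ordinal hd) (Ordinal hd)).
      by apply: (C2k_Omega (k := 1)); apply: delta_C2k.
    move=> V hV; exists (C2k 1), (Omega (C:=C) (d:=d)).
    split; first by right; exists 1%N.
    split; first by left.
    split; first exact: arrow_C21.
    by apply: arrow_sub; case: hV.
  split; last by left.
  move=> V W [->|[a [ha ->]]] [->|[b [hb ->]]].
  - by left; apply: arrow_Omega_Omega.
  - by right; apply: arrow_C2k_Omega.
  - by left; apply: arrow_C2k_Omega.
  - case: (leqP a b) => h.
      by left; apply: arrow_C2k_le.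
    by right; apply: arrow_C2k_le => //; apply: ltnW.
split.
  pose P := fun V : mset C d => exists k, (1 <= k <= d)%N /\ V = C2k k.
  pose Val := fun V : mset C d =>
    match excluded_middle_informative (P V) with
    | left h => Rdefinitions.Rminus (log2 (Raxioms.INR d))
                  (log2 (Raxioms.INR (proj1_sig (constructive_indefinite_description _ h))))
    | right _ => Rdefinitions.R0
    end.
  exists Val; split.
    rewrite /Val; case: excluded_middle_informative => // h.
    case: constructive_indefinite_description => k [/andP [hk1 hk2] e] /=.
    rewrite (Omega_C2k hd hk2 e).
    exact: RIneq.Rminus_diag_eq.
  move=> k hk; rewrite /Val; case: excluded_middle_informative => [h|[]]; last first.
    by exists k.
  case: constructive_indefinite_description => k' [/andP [hk1 hk2] e] /=.
  have /andP[_ hkd] := hk.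
  by rewrite (C2k_inj hkd hk2 e).
move=> Val h0 hk.
split.
  move=> V [->|[k [hk' ->]]]; first by rewrite h0; apply: RIneq.Rle_refl.
  by rewrite hk //; apply: val_ge0.
split => //.
move=> V W [->|[a [ha ->]]] [->|[b [hb ->]]].
- rewrite h0; split => _; [exact: arrow_Omega_Omega | apply: RIneq.Rge_refl].
- rewrite h0 hk //; split => _; first exact: arrow_C2k_Omega.
  by apply: RIneq.Rle_ge; apply: val_ge0.
- rewrite h0 hk // val_zero //; split => h.
    have /andP[_ had] := ha.
    have -> : a = d by apply/eqP; rewrite eqn_leq had h.
    exact: arrow_Omega_C2d.
  exact: arrow_Omega_C2k_inv h.
- rewrite !hk // val_cmp //; split => h.
    exact: arrow_C2k_le.
  by have /andP[_ hbd] := hb; apply: arrow_C2k_inv h.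
Qed.
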